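(* Let $\mathcal N=\begin{pmatrix}N&\pi\\ \sigma&-N^*\end{pmatrix}$ be a paired operator on the standard Courant algebroid $A\oplus A^*$ such that $N\pi^\sharp=\pi^\sharp N^*$ and $i_{NX}\sigma=N^*(i_X\sigma)$ for all $X\in\Gamma(A)$. If $\mathcal T_{\mathcal N}(\alpha,\beta)=0$ for all $\alpha,\beta\in\Gamma(A^* )$ and $\mathcal T_{\mathcal N}(X,Y)=0$ for all $X,Y\in\Gamma(A)$, then $(A,\pi,N,\mathrm{d}\sigma)$ is a Poisson quasi-Nijenhuis Lie algebroid.
   Context: $(A,[\cdot,\cdot],\rho)$ is a Lie algebroid over $M$ with differential $\mathrm{d}$. The standard Courant algebroid on $A\oplus A^*$: pairing $\langle X+\alpha,Y+\beta\rangle=\alpha(Y)+\beta(X)$, anchor $\rho(X+\alpha)=\rho(X)$, bracket $[\![X+\alpha,Y+\beta]\!]=[X,Y]+\mathcal L_X\beta-\mathcal L_Y\alpha+\tfrac12\mathrm{d}(\alpha(Y)-\beta(X))$. A paired operator is a bundle map $\mathcal N$ over the identity with $\langle e_1,\mathcal Ne_2\rangle+\langle\mathcal Ne_1,e_2\rangle=0$; equivalently $\mathcal N=\begin{pmatrix}N&\pi\\ \sigma&-N^*\end{pmatrix}$, $N:A\to A$, $\pi\in\Gamma(\wedge^2A)$ acting by $\pi^\sharp\alpha=i_\alpha\pi$, $\sigma\in\Gamma(\wedge^2A^* )$ acting by $X\mapsto i_X\sigma$. $[\![e_1,e_2]\!]_{\mathcal N}=[\![\mathcal Ne_1,e_2]\!]+[\![e_1,\mathcal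 Ne_2]\!]-\mathcal N[\![e_1,e_2]\!]$, $\mathcal T_{\mathcal N}(e_1,e_2)=[\![\mathcal Ne_1,\mathcal Ne_2]\!]-\mathcal N[\![e_1,e_2]\!]_{\mathcal N}$. Poisson quasi-Nijenhuis Lie algebroid $(A,\pi,N,\phi)$: $\pi\in\Gamma(\wedge^2A)$ Poisson; $N:A\to A$ compatible with $\pi$, i.e. $N\pi^\sharp=\pi^\sharp N^*$ and $[\alpha,\beta]_{N\pi}=[N^*\alpha,\beta]_\pi+[\alpha,N^*\beta]_\pi-N^*[\alpha,\beta]_\pi$, where $[\alpha,\beta]_\pi=\mathcal L_{\pi^\sharp\alpha}\beta-\mathcal L_{\pi^\sharp\beta}\alpha-\mathrm{d}(\pi(\alpha,\beta))$ and $[\cdot,\cdot]_{N\pi}$ is the same with $N\pi$; $\phi\in\Gamma(\wedge^3A^* )$ closed with $\mathcal T_N(X,Y)=-\pi^\sharp(i_{X\wedge Y}\phi)$ and $\mathrm{d}(i_N\phi)=0$, where $\mathcal T_N(X,Y)=[NX,NY]-N([NX,Y]+[X,NY]-N[X,Y])$ and $(i_N\phi)(X,Y,Z)=\phi(NX,Y,Z)+\phi(X,NY,Z)+\phi(X,Y,NZ)$. *)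

(* Defs.v *)
(* Algebraic (Lie–Rinehart) model of a Lie algebroid:
   C  = ring of functions on M, E = Gamma(A) as a C-module (finitely generated
   projective, i.e. sections of a vector bundle), 1-forms Gamma(A^* ) are
   C-linear maps E -> C, k-forms are C-multilinear alternating maps. *)
From HB Require Import structures.
From mathcomp Require Import all_boot all_order all_algebra.
Set Implicit Arguments. Unset Strict Implicit. Unset Printing Implicit Defensive.
Import Order.TTheory GRing.Theory Num.Theory.
Local Open Scope ring_scope.

Section LieAlgebroidDefs.
Variables (C : comUnitRingType) (E : lmodType C).

(* functions E -> C; the sections of A^* are the C-linear ones *)
Definition form1 := E -> C.
Definition lin1 (a : form1) : Prop :=
  forall (f : C) (X Y : E), a (f *: X + Y) = f * a X + a Y.

Record lie_algebroid (rho : E -> C -> C) (br : E -> E -> E) : Prop := {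
  (* Gamma(A) is finitely generated projective (dual basis lemma): sections of a vector bundle *)
  la_fgproj : exists n (e : 'I_n -> E) (c : 'I_n -> form1),
      (forall i, lin1 (c i)) /\ (forall X, X = \sum_(i < n) c i X *: e i);
  la_anchor_lin : forall (f g : C) (X Y : E), rho (f *: X + Y) g = f * rho X g + rho Y g;
  la_anchor_add : forall (X : E) (g h : C), rho X (g + h) = rho X g + rho X h;
  la_anchor_mul : forall (X : E) (g h : C), rho X (g * h) = g * rho X h + rho X g * h;
  la_br_add : forall X Y Z : E, br (X + Y) Z = br X Z + br Y Z;
  la_br_skew : forall X Y : E, br X Y = - br Y X;
  la_br_jacobi : forall X Y Z : E,
      br X (br Y Z) + br Y (br Z X) + br Z (br X Y) = 0;
  la_br_leibniz : forall (f : C) (X Y : E), br X (f *: Y) = f *: br X Y + rho X f *: Y;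
  la_anchor_br : forall (X Y : E) (f : C),
      rho (br X Y) f = rho X (rho Y f) - rho Y (rho X f)
}.

Variables (rho : E -> C -> C) (br : E -> E -> E).

Definition d0 (f : C) : form1 := fun Y => rho Y f.
Definition lie (X : E) (b : form1) : form1 := fun Y => rho X (b Y) - b (br X Y).
Definition d2 (s : E -> E -> C) : E -> E -> E -> C := fun X Y Z =>
  rho X (s Y Z) - rho Y (s X Z) + rho Z (s X Y)
  - s (br X Y) Z + s (br X Z) Y - s (br Y Z) X.
Definition d3 (p : E -> E -> E -> C) : E -> E -> E -> E -> C := fun X0 X1 X2 X3 =>
  rho X0 (p X1 X2 X3) - rho X1 (p X0 X2 X3) + rho X2 (p X0 X1 X3) - rho X3 (p X0 X1 X2)
  - p (br X0 X1) X2 X3 + p (br X0 X2) X1 X3 - p (br X0 X3) X1 X2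
  - p (br X1 X2) X0 X3 + p (br X1 X3) X0 X2 - p (br X2 X3) X0 X1.

(* the standard Courant algebroid A + A^*; elements are pairs (X, alpha) *)
Definition half : C := (2%:R)^-1.
Definition pair_add (e1 e2 : E * form1) : E * form1 :=
  (e1.1 + e2.1, fun Z => e1.2 Z + e2.2 Z).
Definition pair_sub (e1 e2 : E * form1) : E * form1 :=
  (e1.1 - e2.1, fun Z => e1.2 Z - e2.2 Z).
Definition courant_zero (e : E * form1) : Prop := e.1 = 0 /\ forall Z, e.2 Z = 0.
Definition cbr (e1 e2 : E * form1) : E * form1 :=
  (br e1.1 e2.1,
   fun Z => lie e1.1 e2.2 Z - lie e2.1 e1.2 Z + half * d0 (e1.2 e2.1 - e2.2 e1.1) Z).

(* paired operator calN = [[N, pi],[sigma, -N^*]], pi^# = pis, i_X sigma = sg X *)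
Definition dual (N : E -> E) (a : form1) : form1 := fun Z => a (N Z).
Definition pairedOp (N : E -> E) (pis : form1 -> E) (sg : E -> E -> C)
  (e : E * form1) : E * form1 :=
  (N e.1 + pis e.2, fun Z => sg e.1 Z - e.2 (N Z)).
Definition cbrN (M : E * form1 -> E * form1) (e1 e2 : E * form1) : E * form1 :=
  pair_sub (pair_add (cbr (M e1) e2) (cbr e1 (M e2))) (M (cbr e1 e2)).
Definition torsionC (M : E * form1 -> E * form1) (e1 e2 : E * form1) : E * form1 :=
  pair_sub (cbr (M e1) (M e2)) (M (cbrN M e1 e2)).

Definition lin_endo (N : E -> E) : Prop :=
  forall (f : C) (X Y : E), N (f *: X + Y) = f *: N X + N Y.
(* pi in Gamma(wedge^2 A), given through pi^# : A^* -> A, pi(a,b) = b(pi^# a) *)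
Definition bivector (pis : form1 -> E) : Prop :=
  (forall (f : C) (a b : form1), lin1 a -> lin1 b ->
      pis (fun Z => f * a Z + b Z) = f *: pis a + pis b)
  /\ (forall a b : form1, lin1 a -> lin1 b -> b (pis a) = - a (pis b)).
Definition two_form (sg : E -> E -> C) : Prop :=
  (forall (f : C) (X Y Z : E), sg (f *: X + Y) Z = f * sg X Z + sg Y Z)
  /\ (forall X Y : E, sg X Y = - sg Y X).

Definition brP (P : form1 -> E) (a b : form1) : form1 :=
  fun Z => lie (P a) b Z - lie (P b) a Z - d0 (b (P a)) Z.
Definition nijT (N : E -> E) (X Y : E) : E :=
  br (N X) (N Y) - N (br (N X) Y + br X (N Y) - N (br X Y)).
Definition iN (N : E -> E) (p : E -> E -> E -> C) : E -> E -> E -> C :=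
  fun X Y Z => p (N X) Y Z + p X (N Y) Z + p X Y (N Z).
(* i_{X /\ Y} phi = i_X i_Y phi *)
Definition iXY (p : E -> E -> E -> C) (X Y : E) : form1 := fun Z => p Y X Z.

Record PqN (pis : form1 -> E) (N : E -> E) (p : E -> E -> E -> C) : Prop := {
  (* [pi,pi] = 0, i.e. pi^# [a,b]_pi = [pi^# a, pi^# b] *)
  pqn_poisson : forall a b, lin1 a -> lin1 b ->
      br (pis a) (pis b) = pis (brP pis a b);
  pqn_compat1 : forall a, lin1 a -> N (pis a) = pis (dual N a);
  pqn_compat2 : forall a b, lin1 a -> lin1 b -> forall Z,
      brP (fun c => N (pis c)) a b Z
      = brP pis (dual N a) b Z + brP pis a (dual N b) Z - dual N (brP pis a b) Z;
  pqn_closed : forall X0 X1 X2 X3, d3 p X0 X1 X2 X3 = 0;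
  pqn_torsion : forall X Y, nijT N X Y = - pis (iXY p X Y);
  pqn_diN : forall X0 X1 X2 X3, d3 (iN N p) X0 X1 X2 X3 = 0
}.

End LieAlgebroidDefs.

(* Main.v *)
Require Import Defs.
From HB Require Import structures.
From mathcomp Require Import all_boot all_order all_algebra.
From mathcomp Require Import ring.
From Stdlib Require Import FunctionalExtensionality.
Import GRing.Theory.
Local Open Scope ring_scope.
Set Implicit Arguments. Unset Strict Implicit.

Lemma dbl0 (V : zmodType) (x : V) : x = x + x -> x = 0.
Proof. by move=> H; rewrite -[LHS](addrK x x) -H subrr. Qed.

Section H.
Variables (C : comUnitRingType) (E : lmodType C)
  (rho : E -> C -> C) (br : E -> E -> E).
Hypothesis LA : lie_algebroid rho br.

Lemma rhoXD X g h : rho X (g + h) = rho X g + rho X h.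
Proof. exact: (la_anchor_add LA). Qed.
Lemma rhoX0 X : rho X 0 = 0.
Proof. by apply: dbl0; rewrite -rhoXD addr0. Qed.
Lemma rhoXN X g : rho X (- g) = - rho X g.
Proof. by apply/esym/addr0_eq; rewrite -rhoXD subrr rhoX0. Qed.
Lemma rhoD X Y g : rho (X + Y) g = rho X g + rho Y g.
Proof. by have := la_anchor_lin LA 1 g X Y; rewrite scale1r mul1r. Qed.
Lemma rho0 g : rho 0 g = 0.
Proof. by apply: dbl0; rewrite -rhoD addr0. Qed.
Lemma rhoN X g : rho (- X) g = - rho X g.
Proof. by apply/esym/addr0_eq; rewrite -rhoD subrr rho0. Qed.
Lemma rhoZ f X g : rho (f *: X) g = f * rho X g.
Proof. by have := la_anchor_lin LA f g X 0; rewrite !addr0 rho0 addr0. Qed.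

Lemma brDl X Y Z : br (X + Y) Z = br X Z + br Y Z.
Proof. exact (la_br_add LA X Y Z). Qed.
Lemma brDr X Y Z : br Z (X + Y) = br Z X + br Z Y.
Proof. by rewrite (la_br_skew LA) brDl opprD -!(la_br_skew LA). Qed.
Lemma br0l Z : br 0 Z = 0.
Proof. by apply: dbl0; rewrite -brDl addr0. Qed.
Lemma br0r Z : br Z 0 = 0.
Proof. by rewrite (la_br_skew LA) br0l oppr0. Qed.
Lemma brNl X Z : br (- X) Z = - br X Z.
Proof. by apply/esym/addr0_eq; rewrite -brDl subrr br0l. Qed.
Lemma brNr X Z : br Z (- X) = - br Z X.
Proof. by apply/esym/addr0_eq; rewrite -brDr subrr br0r. Qed.

Section S.
Variable s : E -> E -> C.
Hypothesis sD : forall U V W, s (U + V) W = s U W + s V W.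
Hypothesis sK : forall U V, s U V = - s V U.
Lemma s0 W : s 0 W = 0.
Proof. by apply: dbl0; rewrite -sD addr0. Qed.
Lemma sN U W : s (- U) W = - s U W.
Proof. by apply/esym/addr0_eq; rewrite -sD subrr s0. Qed.
Lemma sJac a b c Z : s (br (br a b) c) Z = s (br (br a c) b) Z - s (br (br b c) a) Z.
Proof.
have J := la_br_jacobi LA a b c.
have -> : br (br a b) c = br (br a c) b - br (br b c) a.
  rewrite (la_br_skew LA (br a b)) (la_br_skew LA (br a c)) (la_br_skew LA (br b c)).
  rewrite (la_br_skew LA a c) brNr opprK.
  apply/eqP; rewrite eq_sym opprK -addr_eq0.
  by rewrite (addrC (br b _)) J.
by rewrite sD sN.
Qed.

Lemma dd X0 X1 X2 X3 : d3 rho br (d2 rho br s) X0 X1 X2 X3 = 0.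
Proof.
rewrite /d3 /d2 !rhoXD !rhoXN !(la_anchor_br LA).
rewrite (sJac X0 X1 X2 X3) (sJac X0 X1 X3 X2) (sJac X0 X2 X3 X1) (sJac X1 X2 X3 X0).
rewrite (sK (br X2 X3) (br X0 X1)) (sK (br X1 X3) (br X0 X2)) (sK (br X1 X2) (br X0 X3)).
ring.
Qed.
End S.
End H.

Unset Implicit Arguments.

Lemma dbl0' (V : zmodType) (x : V) : x = x + x -> x = 0. Proof. exact: dbl0. Qed.

Theorem mainTheorem7 (C : comUnitRingType) (E : lmodType C)
  (rho : E -> C -> C) (br : E -> E -> E)
  (N : E -> E) (pis : form1 E -> E) (sg : E -> E -> C) :
  (2%:R : C) \is a GRing.unit ->
  lie_algebroid rho br ->
  lin_endo N -> bivector pis -> two_form sg ->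
  (forall a : form1 E, lin1 a -> N (pis a) = pis (dual N a)) ->
  (forall X Y : E, sg (N X) Y = sg X (N Y)) ->
  (forall a b : form1 E, lin1 a -> lin1 b ->
     courant_zero (torsionC rho br (pairedOp N pis sg) (0, a) (0, b))) ->
  (forall X Y : E,
     courant_zero (torsionC rho br (pairedOp N pis sg) (X, fun _ => 0) (Y, fun _ => 0))) ->
  PqN rho br pis N (d2 rho br sg).
Proof.
move=> h2 LA NL [pisL pisK] [sgL sgK] comp1 sgNN TA TX.
pose z : form1 E := fun _ => 0.
have lz : lin1 z by move=> f X Y; rewrite /z mulr0 addr0.
have sgD : forall U V W, sg (U + V) W = sg U W + sg V W.
  by move=> U V W; have := sgL 1 U V W; rewrite scale1r mul1r.
have sgZ : forall f U W, sg (f *: U) W = f * sg U W.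
  by move=> f U W; have := sgL f U 0 W; rewrite !addr0 (@s0 _ _ _ sgD) addr0.
have sg0 := @s0 _ _ _ sgD.
have ND : forall U V, N (U + V) = N U + N V.
  by move=> U V; have := NL 1 U V; rewrite !scale1r.
have N0 : N 0 = 0 by apply: dbl0; rewrite -ND addr0.
have pis0 : pis z = 0.
  apply: dbl0; have := pisL 1 z z lz lz; rewrite scale1r => <-.
  by congr pis; apply: functional_extensionality => Z; rewrite /z mulr0 addr0.
have halfdd : forall x : C, Defs.half C * x + Defs.half C * x = x.
  by move=> x; rewrite -mulrDl -mulr2n -mulr_natr /Defs.half mulVr // mul1r.
have l0 : forall a : form1 E, lin1 a -> a 0 = 0.
  by move=> a la; apply: dbl0; have := la 1 0 0; rewrite scale1r addr0 mul1r.
have Mform : forall c, pairedOp N pis sg (0, c) = (pis c, fun Z => - c (N Z)).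
  move=> c; rewrite /pairedOp /= N0 add0r; congr pair.
  by apply: functional_extensionality => Z; rewrite sg0 sub0r.
have MformX : forall X, pairedOp N pis sg (X, z) = (N X, sg X).
  move=> X; rewrite /pairedOp /= pis0 addr0; congr pair.
  by apply: functional_extensionality => Z; rewrite /z subr0.
have ldual : forall a, lin1 a -> lin1 (dual N a).
  by move=> a la f X Y; rewrite /dual NL la.
have rx0 := rhoX0 LA.
have r0 := rho0 LA.
have rxD := rhoXD LA. have rxN := rhoXN LA. have rD := rhoD LA. have rN := rhoN LA.
have rZ := rhoZ LA. have bDl := brDl LA. have bDr := brDr LA. have b0l := br0l LA.
have b0r := br0r LA. have bNl := brNl LA. have bNr := brNr LA.
have cbr00 : forall a b, lin1 a -> lin1 b -> cbr rho br (0, a) (0, b) = (0, z).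
  move=> a b la lb; rewrite /cbr /=; congr pair; first exact (br0l LA _).
  apply: functional_extensionality => Z.
  by rewrite /lie /d0 !r0 b0l !l0 // !subrr rx0 mulr0 addr0.
have Mz : pairedOp N pis sg (0, z) = (0, z).
  rewrite Mform pis0; congr pair.
  by apply: functional_extensionality => Z; rewrite /z oppr0.
have HA : forall a b, lin1 a -> lin1 b ->
  cbrN rho br (pairedOp N pis sg) (0,a) (0,b) = (0, brP rho br pis a b).
  move=> a b la lb; rewrite /cbrN !Mform cbr00 // Mz.
  rewrite /pair_sub /pair_add /cbr /=; congr pair.
    by rewrite b0l b0r !addr0 subrr.
  apply: functional_extensionality => Z.
  rewrite /brP /lie /d0 /z ?r0 ?b0l ?b0r N0 ?l0 // ?oppr0 ?rx0 /=.
  rewrite (pisK a b la lb) sub0r addr0 !rxN opprK -[in RHS](halfdd (rho Z (a (pis b)))).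
  rewrite !addr0; ring.
have TA' : forall a b, lin1 a -> lin1 b ->
   br (pis a) (pis b) = pis (brP rho br pis a b) /\ forall Z,
   lie rho br (pis a) (fun Z => - b (N Z)) Z - lie rho br (pis b) (fun Z => - a (N Z)) Z
   + Defs.half C * d0 rho (- a (N (pis b)) + b (N (pis a))) Z + brP rho br pis a b (N Z) = 0.
  move=> a b la lb; have [h1 h2'] := TA a b la lb.
  move: h1 h2'; rewrite /torsionC HA // !Mform /pair_sub /= => h1 h2'.
  split; first exact: subr0_eq.
  by move=> Z; rewrite -(h2' Z) !opprK.
have HX : forall X Y, cbrN rho br (pairedOp N pis sg) (X, z) (Y, z) =
   (br (N X) Y + br X (N Y) - N (br X Y), d2 rho br sg X Y).
  move=> X Y.
  have cXY : cbr rho br (X, z) (Y, z) = (br X Y, z).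
    congr pair; apply: functional_extensionality => Z.
    by rewrite /lie /d0 /z !rx0 !subrr rx0 mulr0 addr0.
  rewrite /cbrN !MformX cXY MformX /pair_sub /pair_add /cbr /=; congr pair.
  apply: functional_extensionality => Z.
  rewrite /lie /d0 /d2 /z !rx0 (sgK Y X) (sgK Y (br X Z)) (sgK X (br Y Z)) !subr0 !sub0r !rxN.
  rewrite -[in RHS](halfdd (rho Z (sg X Y))).
  ring.
have sgN1 := @sN _ _ _ sgD.
have sgR : forall f U W1 W2, sg U (f *: W1 + W2) = f * sg U W1 + sg U W2.
  by move=> f U W1 W2; rewrite sgK sgL (sgK W1) (sgK W2); ring.
have ld2 : forall U V, lin1 (d2 rho br sg U V).
  move=> U V f W1 W2; rewrite /d2 !sgR (la_anchor_lin LA) !bDr (la_br_leibniz LA) (la_br_leibniz LA).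
  rewrite !sgD !sgZ !rxD !(la_anchor_mul LA) (sgK W1 V) (sgK W1 U) ?rxN.
  ring.
have d2sk : forall U V W, d2 rho br sg U V W = - d2 rho br sg V U W.
  move=> U V W; rewrite /d2 (sgK V U) (la_br_skew LA V U) sgN1 rxN; ring.
have halfdd2 : forall x : C, Defs.half C * (x + x) = x by move=> x; rewrite mulrDr halfdd.
have TX' : forall X Y, nijT br N X Y = pis (d2 rho br sg X Y) /\ forall Z,
   d2 rho br sg X Y (N Z) = sg (br (N X) Y + br X (N Y) - N (br X Y)) Z
     - (cbr rho br (N X, sg X) (N Y, sg Y)).2 Z.
  move=> X Y; have [h1 h2'] := TX X Y.
  move: h1 h2'; rewrite -/z /torsionC HX !MformX /pair_sub /= => h1 h2'.
  split.
    by rewrite /nijT; apply/eqP; rewrite -subr_eq0 -addrA -opprD h1.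
  move=> Z; apply/eqP; rewrite -subr_eq0; apply/eqP.
  by rewrite -[RHS](h2' Z); ring.
have comp1' : forall a, lin1 a -> pis (fun Z => a (N Z)) = N (pis a).
  by move=> a la; rewrite comp1.
split.
- by move=> a b la lb; exact: (TA' a b la lb).1.
- exact: comp1.
- move=> a b la lb Z.
  have [_ h] := TA' a b la lb; have {h} h := h Z.
  have key : b (N (pis a)) = - a (N (pis b)).
    by rewrite comp1 // (pisK _ _ (ldual a la) lb).
  have e := esym (addr0_eq h).
  rewrite [dual N (brP _ _ _ _ _) Z]/dual e /brP /lie /d0 /= -(comp1 a la) -(comp1 b lb) /dual key !rxD !rxN !opprK halfdd2.
  ring.
- by move=> X0 X1 X2 X3; exact: (dd LA sgD sgK).
- move=> X Y; rewrite (TX' X Y).1 /iXY.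
  have -> : d2 rho br sg X Y = (fun Z => -1 * d2 rho br sg Y X Z + z Z).
    by apply: functional_extensionality => Z; rewrite d2sk /z addr0 mulN1r.
  by rewrite pisL // pis0 addr0 scaleN1r.
- pose tau := fun U V => sg (N U) V.
  have tD : forall U V W, tau (U + V) W = tau U W + tau V W by move=> U V W; rewrite /tau ND sgD.
  have tK : forall U V, tau U V = - tau V U by move=> U V; rewrite /tau sgNN sgK.
  have -> : iN N (d2 rho br sg) = d2 rho br tau.
    apply: functional_extensionality => X; apply: functional_extensionality => Y.
    apply: functional_extensionality => Z.
    rewrite /iN (TX' X Y).2 /cbr /= /d2 /lie /d0 /tau.
    rewrite (sgK Y (br (N X) Z)) (sgK X (br (N Y) Z)) (sgK Y (N X)) !sgNN !sgD !sgN1.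
    rewrite !rxD !rxN !opprK halfdd2 !sgNN.
    ring.
  by move=> X0 X1 X2 X3; exact: (dd LA tD tK).
Qed.
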